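(* Let $k\le n$ be positive integers and $A\in\mathbb{C}^{n\times n}$ with eigenvalues ordered so that $|\lambda_1(A)|\ge\cdots\ge|\lambda_n(A)|$. Then $$\left|\prod_{i=1}^k\lambda_i(A)\right|\le\left(\frac nk\right)^{k/2}\sqrt n^{\,k}\min\left\{\max_{|\alpha|=k}\prod_{i\in\alpha}\|\mathrm{col}_i(A)\|_\infty,\ \max_{|\alpha|=k}\prod_{i\in\alpha}\|\mathrm{row}_i(A)\|_\infty\right\},$$ where the maxima are over subsets $\alpha\subseteq\{1,\ldots,n\}$ with $|\alpha|=k$.
   Context: $\mathrm{col}_i(A)$ is the $i$th column and $\mathrm{row}_i(A)$ the (transposed) $i$th row of $A$; $\|\cdot\|_\infty$ is the maximum-modulus vector norm. *)

(* Defs.v *)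
From HB Require Import structures.
From mathcomp Require Import all_boot all_order all_algebra.
From mathcomp Require Import reals.
From mathcomp.real_closed Require Import complex.
Set Implicit Arguments. Unset Strict Implicit. Unset Printing Implicit Defensive.
Import Order.TTheory GRing.Theory Num.Theory.
Local Open Scope ring_scope.

Definition cmod (R : realType) (z : R[i]) : R := Normc.normc z.

Definition colnorm (R : realType) (n : nat) (A : 'M[R[i]]_n) (i : 'I_n) : R :=
  \big[Num.max/0]_(j < n) cmod (A j i).
Definition rownorm (R : realType) (n : nat) (A : 'M[R[i]]_n) (i : 'I_n) : R :=
  \big[Num.max/0]_(j < n) cmod (A i j).

Definition max_subset_prod (R : realType) (n k : nat) (f : 'I_n -> R) : R :=
  \big[Num.max/0]_(alpha : {set 'I_n} | #|alpha| == k) \prod_(i in alpha) f i.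

(* Main.v *)
Require Import Defs.
From HB Require Import structures.
From mathcomp Require Import all_boot all_order all_algebra.
From mathcomp Require Import reals.
From mathcomp.real_closed Require Import complex.
From mathcomp Require Import fingroup perm sesquilinear spectral mxred.
From mathcomp Require Import ring.
Set Implicit Arguments. Unset Strict Implicit. Unset Printing Implicit Defensive.
Import Order.TTheory GRing.Theory Num.Theory.
Local Open Scope ring_scope.

Section Expand.
Variable R : comNzRingType.
Lemma det_mul_expand k n (X : 'M[R]_(k,n)) (Z : 'M[R]_(n,k)) :
  \det (X *m Z) = \sum_(f : {ffun 'I_k -> 'I_n})
     \det (\matrix_(i, j) X i (f j)) * \prod_j Z (f j) j.
Proof.
rewrite /determinant.
transitivity (\sum_(s : 'S_k) \sum_(g : {ffun 'I_k -> 'I_n})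
    (-1) ^+ s * \prod_i (X i (g i) * Z (g i) (s i))).
  apply: eq_bigr => s _; rewrite -big_distrr; congr (_ * _).
  under eq_bigr do rewrite mxE.
  by rewrite bigA_distr_bigA.
under [RHS]eq_bigr do rewrite big_distrl.
rewrite [RHS]exchange_big; apply: eq_bigr => s _ /=.
rewrite (reindex (fun f : {ffun 'I_k -> 'I_n} => [ffun i => f (s i)])) /=; last first.
  exists (fun g : {ffun 'I_k -> 'I_n} => [ffun i => g ((s^-1)%g i)]) => f _;
  by apply/ffunP => i; rewrite !ffunE ?permKV ?permK.
apply: eq_bigr => f _; rewrite -mulrA; congr (_ * _).
under eq_bigr do rewrite ffunE.
rewrite big_split /=; congr (_ * _).
  by apply: eq_bigr => i _; rewrite mxE.
by rewrite [RHS](reindex_perm s).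
Qed.
End Expand.
Local Open Scope sesquilinear_scope.
Section Gram.
Variable C : numClosedFieldType.

Lemma trmxC_mul m p q (A : 'M[C]_(m,p)) (B : 'M[C]_(p,q)) :
  (A *m B)^t* = B^t* *m A^t*.
Proof. by rewrite trmx_mul map_mxM. Qed.

Lemma gram_diag_ge0 m p (W : 'M[C]_(m,p)) i : 0 <= (W *m W^t*) i i.
Proof.
rewrite mxE; apply: sumr_ge0 => j _; rewrite !mxE; exact: mul_conjC_ge0.
Qed.

Lemma gram_tr_ge0 m p (W : 'M[C]_(m,p)) : 0 <= \tr (W *m W^t*).
Proof. by apply: sumr_ge0 => i _; apply: gram_diag_ge0. Qed.

Lemma gram_adj m p (W : 'M[C]_(m,p)) : (W *m W^t*)^t* = W *m W^t*.
Proof. by rewrite trmxC_mul trmxCK. Qed.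

Lemma det_gram k p (W : 'M[C]_(k,p)) :
  0 <= \det (W *m W^t*) /\ \det (W *m W^t*) <= (\tr (W *m W^t*) / k%:R) ^+ k.
Proof.
set H := W *m W^t*.
have Hn : H \is normalmx by apply/normalmxP; rewrite /H gram_adj.
have HE := orthomx_spectralP Hn.
set P := spectralmx H in HE; set d := spectral_diag H in HE.
have Pu : P \is unitarymx := spectral_unitarymx H.
have Pi : P \in unitmx := unitarymx_unit Pu.
have detH : \det H = \prod_i d 0 i.
  rewrite HE !det_mulmx mulrC mulrA -det_mulmx mulmxV // det1 mul1r.
  by rewrite det_diag.
have trH : \tr H = \sum_i d 0 i.
  by rewrite HE mxtrace_mulC mulmxA mulmxV // mul1mx mxtrace_diag.
have dE : diag_mx d = (P *m W) *m (P *m W)^t*.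
  rewrite trmxC_mul mulmxA -(mulmxA P W) -/H HE -(invmx_unitary Pu).
  by rewrite !mulmxA mulmxV // mul1mx mulmxK.
have d_ge0 i : 0 <= d 0 i.
  by have := gram_diag_ge0 (P *m W) i; rewrite -dE mxE eqxx mulr1n.
rewrite detH trH; split; first by apply: prodr_ge0 => i _.
have := @leif_AGM C 'I_k predT (fun i => d 0 i).
rewrite /= cardT size_enum_ord => /(_ (fun i _ => d_ge0 i)) /leifP.
by case: ifP => [_ /eqP -> | _ /ltW].
Qed.

Lemma bessel_tr k n m (Z : 'M[C]_(k,n)) (Cm : 'M[C]_(n,m)) :
  Z *m Z^t* = 1%:M ->
  \tr ((Z *m Cm) *m (Z *m Cm)^t*) <= \tr (Cm *m Cm^t*).
Proof.
move=> ZZ.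
set Pj := Z^t* *m Z.
have PjA : Pj^t* = Pj by rewrite /Pj trmxC_mul trmxCK.
have PjP : Pj *m Pj = Pj by rewrite /Pj mulmxA -(mulmxA _ Z) ZZ mulmx1.
set Q := 1%:M - Pj.
have QQ : Q *m Q^t* = Q.
  rewrite /Q [(_ - _)^T]linearB /= map_mxB PjA trmx1 map_mx1.
  by rewrite mulmxBl !mulmxBr !mul1mx mulmx1 PjP subrr subr0.
have e1 : \tr ((Z *m Cm) *m (Z *m Cm)^t*) = \tr (Cm^t* *m Pj *m Cm).
  by rewrite trmxC_mul -mulmxA mxtrace_mulC [RHS]mxtrace_mulC /Pj !mulmxA.
have e2 : \tr (Cm *m Cm^t*) = \tr (Cm^t* *m Cm) by rewrite mxtrace_mulC.
rewrite e1 e2 -subr_ge0.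
have -> : \tr (Cm^t* *m Cm) - \tr (Cm^t* *m Pj *m Cm)
    = \tr ((Cm^t* *m Q) *m (Cm^t* *m Q)^t*).
  rewrite trmxC_mul trmxCK mulmxA -(mulmxA _ Q) QQ /Q mulmxBr mulmx1 mulmxBl.
  by rewrite linearB.
exact: gram_tr_ge0.
Qed.

Lemma det_conj n (D : 'M[C]_n) : \det (D^t*) = (\det D)^*.
Proof. by rewrite det_map_mx det_tr. Qed.

Lemma det_rank_lt n (M : 'M[C]_n) : (\rank M < n)%N -> \det M = 0.
Proof.
move=> lt; apply/eqP; apply: contraLR lt => /negP dM.
rewrite -leqNgt; have : M \in unitmx by rewrite unitmxE unitfE; apply/negP.
by rewrite -row_free_unit => /eqP ->.
Qed.

Lemma gram_mul_le k n m (Y : 'M[C]_(k,n)) (Cm : 'M[C]_(n,m)) :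
  \det ((Y *m Cm) *m (Y *m Cm)^t*)
    <= (\tr (Cm *m Cm^t*) / k%:R) ^+ k * \det (Y *m Y^t*).
Proof.
have [fY | nfY] := boolP (row_free Y); last first.
  have rY : (\rank Y < k)%N.
    by rewrite ltn_neqAle rank_leq_row andbT; exact: nfY.
  rewrite !det_rank_lt ?mulr0 //.
    exact: leq_ltn_trans (mxrankM_maxl _ _) rY.
  exact: leq_ltn_trans (mxrankM_maxl _ _) (leq_ltn_trans (mxrankM_maxl _ _) rY).
have kn : (k <= n)%N by have := rank_leq_col Y; rewrite (eqP fY).
set Z := schmidt Y.
have Zu : Z *m Z^t* = 1%:M by apply/unitarymxP; exact: schmidt_unitarymx.
have /submxP [D YE] : (Y <= Z)%MS by rewrite eqmx_schmidt_free.
set a := \det D * (\det D)^*.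
have a_ge0 : 0 <= a by exact: mul_conjC_ge0.
have -> : \det (Y *m Y^t*) = a.
  by rewrite YE trmxC_mul !mulmxA -(mulmxA D) Zu mulmx1 det_mulmx det_conj.
have -> : \det ((Y *m Cm) *m (Y *m Cm)^t*) =
    a * \det ((Z *m Cm) *m (Z *m Cm)^t*).
  rewrite YE -(mulmxA D).
  have -> : D *m (Z *m Cm) *m (D *m (Z *m Cm))^t* =
      D *m ((Z *m Cm) *m (Z *m Cm)^t*) *m D^t*.
    by rewrite !trmxC_mul !mulmxA.
  by rewrite !det_mulmx det_conj /a mulrAC.
rewrite [X in _ <= X]mulrC; apply: ler_wpM2l => //.
have [g0 gle] := det_gram (Z *m Cm).
apply: le_trans gle _.
have kinv : 0 <= (k%:R : C)^-1 by rewrite invr_ge0 ler0n.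
apply: lerXn2r; rewrite ?nnegrE ?mulr_ge0 ?gram_tr_ge0 //.
by apply: ler_wpM2r => //; apply: bessel_tr.
Qed.

Section CB.
Variables k n : nat.
Implicit Types (Y : 'M[C]_(k,n)).

Definition tf Y (f : {ffun 'I_k -> 'I_n}) : C :=
  \det (\matrix_(i, j) Y i (f j)) * \prod_j (Y j (f j))^*.
Definition wg Y (g : {set 'I_n}) : C :=
  \sum_(f : {ffun 'I_k -> 'I_n} | injectiveb f && (f @: [set: 'I_k] == g)) tf Y f.

Lemma expandE Y (e : 'rV[C]_n) :
  \det (Y *m diag_mx e *m Y^t*) =
  \sum_(g : {set 'I_n} | #|g| == k) (\prod_(i in g) e 0 i) * wg Y g.
Proof.
rewrite -mulmxA det_mul_expand.
transitivity (\sum_(f : {ffun 'I_k -> 'I_n}) (\prod_j e 0 (f j)) * tf Y f).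
  apply: eq_bigr => f _; rewrite /tf.
  under eq_bigr do rewrite mul_diag_mx !mxE.
  by rewrite big_split /= mulrCA.
rewrite (bigID (fun f : {ffun 'I_k -> 'I_n} => injectiveb f)) /=.
rewrite [X in _ + X]big1 ?addr0; last first.
  move=> f /injectivePn [j1 [j2 D12 E12]]; rewrite /tf -det_tr.
  rewrite (determinant_alternate D12) ?mul0r ?mulr0 // => i.
  by rewrite !mxE E12.
rewrite (partition_big (fun f : {ffun 'I_k -> 'I_n} => f @: [set: 'I_k])
            (fun g => #|g| == k)) /=; last first.
  by move=> f /injectiveP fi; rewrite card_imset // cardsT card_ord.
apply: eq_bigr => g _; rewrite /wg big_distrr /=.
apply: eq_bigr => f /andP [/injectiveP fi /eqP <-].
rewrite big_imset /=; last by move=> x y _ _; apply: fi.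
by congr (_ * _); apply: eq_bigl => j; rewrite inE.
Qed.

Lemma wg_det Y (g : {set 'I_n}) : #|g| = k ->
  wg Y g = \det (Y *m diag_mx (\row_i ((i \in g)%:R)) *m Y^t*).
Proof.
move=> cg; rewrite expandE (bigD1 g) /=; last by rewrite cg.
rewrite [X in _ + X]big1 ?addr0; last first.
  move=> g' /andP [cg' ng'].
  have : ~~ (g' \subset g).
    by apply: contra ng' => sg; rewrite eqEcard sg (eqP cg') cg leqnn.
  case/subsetPn => i ig' nig.
  by rewrite (bigD1 i) //= mxE (negbTE nig) !mul0r.
rewrite big1 ?mul1r // => i ig.
by rewrite mxE ig.
Qed.

Lemma sum_wg Y : \sum_(g : {set 'I_n} | #|g| == k) wg Y g = \det (Y *m Y^t*).
Proof.
have := expandE Y (const_mx 1); rewrite diag_const_mx mulmx1 => ->.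
by apply: eq_bigr => g _; rewrite big1 ?mul1r // => i _; rewrite mxE.
Qed.

Lemma wg_ge0 Y (g : {set 'I_n}) : #|g| = k -> 0 <= wg Y g.
Proof.
move=> cg; rewrite wg_det //.
set Dg := diag_mx _.
have DD : Dg *m Dg^t* = Dg.
  rewrite /Dg mul_diag_mx; apply/matrixP => i j; rewrite !mxE.
  case: eqVneq => [<-|_]; case: (_ \in g); by rewrite ?mulr0n ?mulr1n ?conjC0 ?conjC1 ?mulr0 ?mul0r ?mulr1 ?mul1r.
have -> : Y *m Dg *m Y^t* = (Y *m Dg) *m (Y *m Dg)^t*.
  by rewrite trmxC_mul [RHS]mulmxA -[in RHS](mulmxA Y Dg) DD.
exact: (det_gram _).1.
Qed.

Lemma cb_diag_le Y (e : 'rV[C]_n) (Mb : C) :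
  (forall g : {set 'I_n}, #|g| = k -> \prod_(i in g) e 0 i <= Mb) ->
  \det (Y *m diag_mx e *m Y^t*) <= Mb * \det (Y *m Y^t*).
Proof.
move=> H; rewrite expandE -sum_wg big_distrr /=.
apply: ler_sum => g /eqP cg; rewrite mulrC [X in _ <= X]mulrC.
by apply: ler_wpM2l; [exact: wg_ge0 | exact: H].
Qed.
End CB.
End Gram.

Lemma det_trig_sub (R : comNzRingType) n k (T : 'M[R]_n) (g : 'I_k -> 'I_n) :
  injective g -> is_trig_mx T ->
  \det (\matrix_(i, j) T (g i) (g j)) = \prod_i T (g i) (g i).
Proof.
move=> ginj /is_trig_mxP Ttrig.
rewrite /determinant (bigD1 1%g) //= [X in _ + X]big1 ?addr0.
  rewrite odd_perm1 expr0 mul1r; apply: eq_bigr => i _; by rewrite mxE perm1.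
move=> s s1.
have [/existsP [i /eqP Hi] | /existsP nH] :=
  boolP [exists i, T (g i) (g (s i)) == 0].
  by rewrite (bigD1 i) //= mxE Hi mul0r mulr0.
exfalso; move/eqP: s1; apply; apply/permP => i0; rewrite perm1.
have le i : (g (s i) <= g i)%N.
  rewrite leqNgt; apply/negP => lt; apply: nH; exists i.
  by rewrite Ttrig.
have sumE : (\sum_i g (s i) = \sum_i g i)%N.
  by rewrite [RHS](reindex_perm s).
have : (\sum_i (g i - g (s i)) == 0)%N.
  rewrite -(eqn_add2l (\sum_i g (s i))) addn0 -big_split /= sumE.
  by apply/eqP; apply: eq_bigr => j _; rewrite subnKC.
rewrite sum_nat_eq0 => /forallP /(_ i0) /=; rewrite subn_eq0 => lei.
apply: ginj; apply/val_inj/eqP; rewrite eqn_leq le /=; exact: lei.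
Qed.

Lemma char_poly_conj (F : fieldType) n (P A : 'M[F]_n) : P \in unitmx ->
  char_poly (P *m A *m invmx P) = char_poly A.
Proof.
move=> Pu; rewrite /char_poly /char_poly_mx.
set mP := map_mx (@polyC F) P; set mPi := map_mx (@polyC F) (invmx P).
have mPPi : mP *m mPi = 1%:M by rewrite -map_mxM mulmxV // map_mx1.
have -> : 'X%:M - map_mx polyC (P *m A *m invmx P) =
          mP *m ('X%:M - map_mx polyC A) *m mPi.
  rewrite mulmxBr mulmxBl !map_mxM -/mP -/mPi.
  by rewrite scalar_mxC -(mulmxA _ mP) mPPi mulmx1.
by rewrite !det_mulmx mulrAC -det_mulmx mPPi det1 mul1r.
Qed.


Lemma char_poly_tr (R : comNzRingType) n (A : 'M[R]_n) :
  char_poly A^T = char_poly A.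
Proof.
rewrite /char_poly -det_tr; congr (determinant _).
by rewrite /char_poly_mx linearB /= tr_scalar_mx map_trmx trmxK.
Qed.

Lemma schur_match (C : numClosedFieldType) n (A : 'M[C]_n) (lam : 'I_n -> C) :
  (0 < n)%N -> char_poly A = \prod_(j < n) ('X - (lam j)%:P) ->
  exists P : 'M[C]_n, exists s : 'S_n,
    [/\ P *m P^t* = 1%:M, is_trig_mx (P *m A *m P^t*) &
        forall j, lam j = (P *m A *m P^t*) (s j) (s j)].
Proof.
move=> n0 cA; have [P Pu PT] := Schur A n0.
have Pi : P \in unitmx by apply: unitarymx_unit.
move: PT; rewrite /similar_to /= conjumx // invmx_unitary // => PT.
set T := P *m A *m P^t* in PT *.
have cT : char_poly T = char_poly A.
  by rewrite /T -invmx_unitary // char_poly_conj.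
rewrite char_poly_trig // in cT.
have : perm_eq [tuple lam j | j < n] [tuple T i i | i < n].
  apply: prod_XsubC_eq; rewrite !big_tuple.
  under eq_bigr do rewrite tnth_mktuple.
  under [RHS]eq_bigr do rewrite tnth_mktuple.
  by rewrite cT cA.
case/tuple_permP => s sE; exists P, s; split => //.
  exact/unitarymxP.
move=> j; have := congr1 (fun t => nth 0 t j) sE.
by rewrite /= !nth_mktuple tnth_mktuple.
Qed.

Section Main.
Variable R : realType.
Local Notation C := (R[i]).

Lemma cmodE (z : C) : `|z| = (cmod z)%:C%C.
Proof. reflexivity. Qed.

Lemma cmod_ge0 (z : C) : 0 <= cmod z.
Proof. by rewrite -ler0c -cmodE. Qed.

Lemma colnorm_ge0 n (A : 'M[C]_n) j : 0 <= colnorm A j.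
Proof. exact: bigmax_ge_id. Qed.

Lemma cmod_le_col n (A : 'M[C]_n) i j : cmod (A i j) <= colnorm A j.
Proof. exact: (le_bigmax_cond 0 (P := xpredT) (fun i => cmod (A i j))). Qed.

Lemma prod_le_msp n k (f : 'I_n -> R) (g : {set 'I_n}) :
  #|g| = k -> \prod_(i in g) f i <= max_subset_prod k f.
Proof.
move=> cg; rewrite /max_subset_prod.
by apply: (le_bigmax_cond 0 (P := fun g : {set 'I_n} => #|g| == k) (fun g : {set 'I_n} => \prod_(i in g) f i)); rewrite cg eqxx.
Qed.

Lemma msp_ge0 n k (f : 'I_n -> R) : 0 <= max_subset_prod k f.
Proof. exact: bigmax_ge_id. Qed.


Lemma col_bound_C n k (A : 'M[C]_n) (lam : 'I_n -> C) :
  (0 < k)%N -> (k <= n)%N -> char_poly A = \prod_(j < n) ('X - (lam j)%:P) ->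
  `|\prod_(j < n | (j < k)%N) lam j| ^+ 2 <=
    ((n%:R * n%:R / k%:R) ^+ k * max_subset_prod k (colnorm A) ^+ 2)%:C%C.
Proof.
move=> k0 kn cA.
have n0 : (0 < n)%N := leq_trans k0 kn.
have [P [s [PP Ttrig lamE]]] := schur_match n0 cA.
pose g (j : 'I_k) := s (widen_ord kn j).
have ginj : injective g.
  by move=> x y /perm_inj /(congr1 val) /= /val_inj.
pose Y : 'M[C]_(k,n) := \matrix_(j, x) P (g j) x.
have YM m (M : 'M[C]_(n,m)) : Y *m M = \matrix_(j, y) (P *m M) (g j) y.
  by apply/matrixP => j y; rewrite !mxE; apply: eq_bigr => x _; rewrite mxE.
have YMY (M : 'M[C]_n) :
    Y *m M *m Y^t* = \matrix_(i, j) (P *m M *m P^t*) (g i) (g j).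
  by apply/matrixP => i j; rewrite YM !mxE; apply: eq_bigr => x _; rewrite !mxE.
have YY : Y *m Y^t* = 1%:M.
  have := YMY 1%:M; rewrite !mulmx1 PP => ->.
  by apply/matrixP => i j; rewrite !mxE (inj_eq ginj).
set W := Y *m A *m Y^t*.
have detW : \det W = \prod_(j < n | (j < k)%N) lam j.
  rewrite /W YMY det_trig_sub // big_ord_narrow.
  by apply: eq_bigr => j _; rewrite lamE.
rewrite -detW.
have WA : W^t* = (Y *m A^t*) *m Y^t* by rewrite /W !trmxC_mul trmxCK !mulmxA.
have h1 : `|\det W| ^+ 2 = \det (W^t* *m W^t*^t*).
  by rewrite normCK trmxCK det_mulmx det_conj mulrC.
have stepa : \det (W^t* *m W^t*^t*) <= \det ((Y *m A^t*) *m (Y *m A^t*)^t*).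
  rewrite WA; apply: le_trans (gram_mul_le _ _) _.
  rewrite trmxCK mxtrace_mulC YY mxtrace_scalar divff ?expr1n ?mul1r //.
  by rewrite pnatr_eq0 -lt0n.
pose cn j := colnorm A j.
pose B : 'M[C]_n := \matrix_(i, j) (if cn j == 0 then 0 else A i j / (cn j)%:C%C).
pose D : 'M[C]_n := diag_mx (\row_j (cn j)%:C%C).
have Dadj : D^t* = D.
  rewrite /D tr_diag_mx map_diag_mx; congr diag_mx; apply/rowP => j.
  by rewrite !mxE; apply: conj_Creal; rewrite ger0_real // ler0c colnorm_ge0.
have cnC j : cn j != 0 -> (cn j)%:C%C != 0.
  by move=> c0; apply: contra c0 => /eqP /(congr1 (@complex.Re R)) /= ->.
have AE : A = B *m D.
  apply/matrixP => i j; rewrite mul_mx_diag !mxE; case: eqP => [c0|/eqP c0].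
    rewrite mul0r; apply/eqP; rewrite -normr_eq0 cmodE.
    have -> : cmod (A i j) = 0.
      by apply/le_anti; rewrite cmod_ge0 andbT -c0 cmod_le_col.
    by [].
  by rewrite divfK // cnC.
have AadjE : A^t* = D *m B^t* by rewrite {1}AE trmxC_mul Dadj.
have Ble i j : `|B i j| <= 1.
  rewrite mxE; case: eqP => [c0|/eqP c0]; first by rewrite normr0 ler01.
  have cpos : 0 < (cn j)%:C%C.
    by rewrite lt_def cnC // ler0c colnorm_ge0.
  rewrite normrM normfV (ger0_norm (ltW cpos)) ler_pdivrMr // mul1r.
  by rewrite cmodE lecR cmod_le_col.
clearbody B.
have trB : \tr (B^t* *m B^t*^t*) <= n%:R * n%:R.
  rewrite trmxCK mxtrace_mulC.
  apply: le_trans (_ : _ <= \sum_(i < n) \sum_(j < n) (1 : C)) _.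
    apply: ler_sum => i _; rewrite mxE; apply: ler_sum => j _.
    by rewrite !mxE -normCK; apply: exprn_ile1 => //; apply: Ble.
  by rewrite !sumr_const !card_ord mulr_natr.
have kinv : 0 <= (k%:R : C)^-1 by rewrite invr_ge0 ler0n.
have stepb : \det ((Y *m A^t*) *m (Y *m A^t*)^t*) <=
    (n%:R * n%:R / k%:R) ^+ k * \det ((Y *m D) *m (Y *m D)^t*).
  rewrite AadjE mulmxA; apply: le_trans (gram_mul_le _ _) _.
  apply: ler_wpM2r; first exact: (det_gram _).1.
  apply: lerXn2r; rewrite ?nnegrE ?mulr_ge0 ?gram_tr_ge0 //.
  by apply: ler_wpM2r.
pose e : 'rV[C]_n := \row_j ((cn j ^+ 2)%:C%C).
have DD : D *m D^t* = diag_mx e.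
  rewrite Dadj /D mul_mx_diag; apply/matrixP => i j; rewrite !mxE.
  case: eqVneq => [->|_]; rewrite ?mulr1n ?mulr0n ?mul0r //.
  by rewrite rmorphXn /= expr2.
set M := max_subset_prod k (colnorm A).
have stepc : \det ((Y *m D) *m (Y *m D)^t*) <= (M ^+ 2)%:C%C.
  rewrite trmxC_mul mulmxA -(mulmxA Y D) DD.
  apply: le_trans (cb_diag_le (Mb := (M ^+ 2)%:C%C) _ _) _; last first.
    by rewrite YY det1 mulr1.
  move=> g0 cg; under eq_bigr do rewrite mxE.
  rewrite -rmorph_prod lecR prodrXl.
  have p0 : 0 <= \prod_(i in g0) cn i by apply: prodr_ge0 => i _; exact: colnorm_ge0.
  apply: lerXn2r; rewrite ?nnegrE ?msp_ge0 //.
  exact: prod_le_msp.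
rewrite h1 rmorphM /= rmorphXn fmorph_div rmorphM !rmorph_nat.
apply: le_trans stepa _; apply: le_trans stepb _.
apply: ler_wpM2l => //; apply: exprn_ge0; apply: divr_ge0; rewrite ?mulr_ge0 ?ler0n //.
Qed.

Lemma col_bound n k (A : 'M[C]_n) (lam : 'I_n -> C) :
  (0 < k)%N -> (k <= n)%N -> char_poly A = \prod_(j < n) ('X - (lam j)%:P) ->
  cmod (\prod_(j < n | (j < k)%N) lam j)
    <= Num.sqrt (n%:R / k%:R) ^+ k * Num.sqrt (n%:R) ^+ k
       * max_subset_prod k (colnorm A).
Proof.
move=> k0 kn cA; have := col_bound_C k0 kn cA.
rewrite cmodE -rmorphXn lecR.
set z := cmod _; set M := max_subset_prod _ _ => H.
have Y0 : 0 <= Num.sqrt (n%:R / k%:R) ^+ k * Num.sqrt (n%:R) ^+ k * M.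
  by rewrite !mulr_ge0 ?exprn_ge0 ?sqrtr_ge0 ?msp_ge0.
rewrite -(ler_pXn2r (ltn0Sn 1)) ?nnegrE ?cmod_ge0 //.
apply: (le_trans H); rewrite le_eqVlt; apply/orP; left; apply/eqP.
rewrite !exprMn -!exprM !(mulnC k 2) !exprM !sqr_sqrtr ?divr_ge0 ?ler0n //.
by rewrite !exprMn; ring.
Qed.

End Main.

Close Scope sesquilinear_scope.
Unset Implicit Arguments.

Theorem theorem3p13 (R : realType) (n k : nat) (A : 'M[R[i]]_n)
    (lam : 'I_n -> R[i]) :
  (0 < k)%N -> (k <= n)%N ->
  char_poly A = \prod_(j < n) ('X - (lam j)%:P) ->
  (forall i j : 'I_n, (i <= j)%N -> cmod (lam j) <= cmod (lam i)) ->
  cmod (\prod_(j < n | (j < k)%N) lam j)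
    <= Num.sqrt (n%:R / k%:R) ^+ k * Num.sqrt (n%:R) ^+ k
       * Num.min (max_subset_prod k (colnorm A)) (max_subset_prod k (rownorm A)).
Proof.
move=> k0 kn cA _.
have h1 := col_bound k0 kn cA.
have h2 := col_bound (A := A^T) (lam := lam) k0 kn.
rewrite char_poly_tr in h2; have {h2} := h2 cA.
have -> : max_subset_prod k (colnorm A^T) = max_subset_prod k (rownorm A).
  rewrite /max_subset_prod; apply: eq_bigr => g _; apply: eq_bigr => i _.
  by rewrite /colnorm /rownorm; apply: eq_bigr => j _; rewrite mxE.
move=> h2; rewrite minEle; by case: ifP.
Qed.
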